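(* For every $\varepsilon>0$, the following algorithm \textsc{DP-AdvRand}$(\varepsilon)$ is $(\varepsilon,0)$-differentially private with respect to the multiset of constraints of a Max-$k$XOR instance with $m$ constraints on $n$ variables: (1) choose $s\in\{1,\dots,\lceil\log_2k\rceil\}$ uniformly at random and put each index of $[n]$ independently into $U$ with probability $p=2^{-s}$; let $F=[n]\setminus U$; (2) draw $x_F\in\{\pm1\}^F$ uniformly at random; (3) for each $j\in U$ let $\mathsf{Act}(j)$ be the set of constraints whose scope contains $j$ and no other index of $U$, let $\Lambda_j=\frac1{\sqrt m}\sum_{\ell\in\mathsf{Act}(j)}b_\ell\prod_{i\in S_\ell\setminus\{j\}}x_i$ (using the values $x_F$), and independently set $x_j=+1$ with probability $\frac{1+\tanh(\varepsilon'\Lambda_j)}2$ and $x_j=-1$ otherwise, where $\varepsilon'=\frac{\varepsilon\sqrt m}2$; (4) pick $r\in\{0,1,\dots,k\}$ uniformly, set $\eta=\cos(r\pi/k)/2$, and independently for each $j\in U$ flip $x_j\leftarrow-x_j$ with probability $(1-\eta)/2$; (5) output $x=(x_F,x_U)$.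
   Context: A Max-$k$XOR instance consists of $m$ constraints indexed by $\ell\in[m]$, each with a scope $S_\ell\subseteq[n]$ of size $k$ and a sign $b_\ell\in\{\pm1\}$, with predicate $P_\ell(x_{S_\ell})=\frac12+\frac{b_\ell}2\prod_{i\in S_\ell}x_i$; all scopes are assumed distinct as sets. Two instances are neighboring if one is obtained from the other by adding or removing one constraint. An algorithm $\mathcal M$ is $(\varepsilon,0)$-DP if $\Pr[\mathcal M(\Phi)\in T]\le e^\varepsilon\Pr[\mathcal M(\Phi')\in T]$ for all neighboring $\Phi,\Phi'$ and all output sets $T$. *)

(* Defs.v *)
From HB Require Import structures.
From mathcomp Require Import all_boot all_order all_algebra.
From mathcomp Require Import all_classical all_reals all_analysis.
Set Implicit Arguments. Unset Strict Implicit. Unset Printing Implicit Defensive.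
Import Order.TTheory GRing.Theory Num.Theory.
Local Open Scope ring_scope.

Section FinDist.
Variable R : realType.

Definition dret (T : finType) (t : T) : T -> R := fun u => (t == u)%:R.
Definition dbind (T U : finType) (d : T -> R) (f : T -> U -> R) : U -> R :=
  fun u => \sum_(t : T) d t * f t u.
Definition dunif (T : finType) : T -> R := fun _ => (#|T|%:R)^-1.
Definition dbern (p : R) : bool -> R := fun b => if b then p else 1 - p.
Definition dprod (n : nat) (d : 'I_n -> bool -> R) : {ffun 'I_n -> bool} -> R :=
  fun x => \prod_(i < n) d i (x i).
Definition prob (T : finType) (d : T -> R) (A : {set T}) : R := \sum_(t in A) d t.

End FinDist.

(* boolean encoding of +-1: true <-> +1, false <-> -1 *)
Definition spm (R : realType) (b : bool) : R := if b then 1 else -1.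

(* a constraint: (scope S, sign b) ; b = true means b_l = +1 *)
Notation constraint n := ({set 'I_n} * bool)%type.

Definition instance (n k : nat) (Phi : seq (constraint n)) : Prop :=
  all (fun c : constraint n => #|c.1| == k) Phi && uniq (map (fun c : constraint n => c.1) Phi).

Definition neighboring (n : nat) (Phi Phi' : seq (constraint n)) : Prop :=
  exists c : constraint n, perm_eq Phi' (c :: Phi) \/ perm_eq Phi (c :: Phi').

Definition tanhR (R : realType) (x : R) : R :=
  (expR x - expR (- x)) / (expR x + expR (- x)).

Section Algo.
Variables (R : realType) (n k : nat).

(* U is encoded by its membership function: U i = true iff i \in U *)
Definition Act (Phi : seq (constraint n)) (U : {ffun 'I_n -> bool}) (j : 'I_n) :=
  seq.filter (fun c : constraint n => (j \in c.1) && [forall i in c.1, U i ==> (i == j)]) Phi.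

Definition Lambda (Phi : seq (constraint n)) (U x : {ffun 'I_n -> bool}) (j : 'I_n) : R :=
  (Num.sqrt (size Phi)%:R)^-1 *
  \sum_(c <- Act Phi U j) spm R c.2 * \prod_(i in c.1 :\ j) spm R (x i).

Definition DPAdvRand (eps : R) (Phi : seq (constraint n)) : {ffun 'I_n -> bool} -> R :=
  let m := size Phi in
  let eps' := eps * Num.sqrt m%:R / 2 in
  (* (1) s in {1,..,ceil(log2 k)} uniformly: s = s0 + 1 *)
  dbind (@dunif R 'I_(up_log 2 k)) (fun s0 =>
  let p : R := (2 ^+ s0.+1)^-1 in
  dbind (dprod (fun _ => dbern p)) (fun U =>
  (* (2) x_F uniform: the F-coordinates of a uniform z *)
  dbind (@dunif R {ffun 'I_n -> bool}) (fun z =>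
  (* (3) x_j for j in U, independently; x_i = z_i for i in F *)
  dbind (dprod (fun i => if U i
                         then dbern ((1 + tanhR (eps' * Lambda Phi U z i)) / 2)
                         else dret R (z i))) (fun y =>
  dbind (@dunif R 'I_k.+1) (fun r =>
  let eta : R := cos ((r : nat)%:R * pi / k%:R) / 2 in
  dbind (dprod (fun i => if U i then dbern ((1 - eta) / 2) else dret R false))
    (fun f =>
  dret R [ffun i => y i (+) f i])))))).

End Algo.

(* Main.v *)
Require Import Defs.
From HB Require Import structures.
From mathcomp Require Import all_boot all_order all_algebra.
From mathcomp Require Import all_classical all_reals all_analysis.
From mathcomp Require Import lra ring.
Import Order.TTheory GRing.Theory Num.Theory.
Local Open Scope ring_scope.

Section Aux.
Variable R : realType.

Lemma dbind_ge0 (T U : finType) (d : T -> R) (f : T -> U -> R) u :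
  (forall t, 0 <= d t) -> (forall t, 0 <= f t u) -> 0 <= dbind d f u.
Proof. by move=> Hd Hf; rewrite /dbind; apply: sumr_ge0 => t _; apply: mulr_ge0. Qed.

Lemma dbind_le_mid (T U : finType) (d : T -> R) (f1 f2 : T -> U -> R) u C :
  (forall t, 0 <= d t) -> (forall t, f1 t u <= C * f2 t u) ->
  dbind d f1 u <= C * dbind d f2 u.
Proof.
move=> Hd Hf; rewrite /dbind mulr_sumr; apply: ler_sum => t _.
by rewrite mulrCA; apply: ler_wpM2l.
Qed.

Lemma dbind_le_first (T U : finType) (d1 d2 : T -> R) (f : T -> U -> R) u C :
  (forall t, d1 t <= C * d2 t) -> (forall t, 0 <= f t u) ->
  dbind d1 f u <= C * dbind d2 f u.
Proof.
move=> Hd Hf; rewrite /dbind mulr_sumr; apply: ler_sum => t _.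
by rewrite mulrA; apply: ler_wpM2r.
Qed.

Lemma dunif_ge0 (T : finType) t : 0 <= @dunif R T t.
Proof. by rewrite /dunif invr_ge0. Qed.

Lemma dret_ge0 (T : finType) (t u : T) : 0 <= dret R t u.
Proof. by rewrite /dret ler0n. Qed.

Lemma dbern_ge0 (p : R) b : 0 <= p <= 1 -> 0 <= dbern p b.
Proof. by case/andP=> h1 h2; case: b => /=; lra. Qed.

Lemma dprod_ge0 n (d : 'I_n -> bool -> R) x :
  (forall i b, 0 <= d i b) -> 0 <= dprod d x.
Proof. by move=> H; rewrite /dprod; apply: prodr_ge0 => i _. Qed.

Lemma q_eq (t : R) : (1 + tanhR t) / 2 = expR t / (expR t + expR (- t)).
Proof.
have h1 := expR_gt0 t; have h2 := expR_gt0 (- t).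
rewrite /tanhR; field; lra.
Qed.

Lemma q_in01 (t : R) : 0 <= (1 + tanhR t) / 2 <= 1.
Proof.
have h1 := expR_gt0 t; have h2 := expR_gt0 (- t).
rewrite q_eq; apply/andP; split; first by apply: divr_ge0; lra.
by rewrite ler_pdivrMr; lra.
Qed.

Lemma ratio_le (a b a' b' H : R) : 0 < a -> 0 < b -> 0 < a' -> 0 < b' -> 1 <= H ->
  a <= H * a' -> b' <= H * b -> a / (a + b) <= H ^+ 2 * (a' / (a' + b')).
Proof.
move=> ha hb ha' hb' hH h1 h2.
rewrite -subr_ge0.
have -> : H ^+ 2 * (a' / (a' + b')) - a / (a + b) =
   (H ^+ 2 * a' * (a + b) - a * (a' + b')) / ((a + b) * (a' + b')).
  by field; apply/andP; split; lra.
apply: divr_ge0; last by apply: mulr_ge0; lra.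
rewrite subr_ge0.
have e1 : a * b' <= (H * a') * (H * b).
  apply: (le_trans (y := (H * a') * b')); first by apply: ler_wpM2r; lra.
  by apply: ler_wpM2l; [apply: mulr_ge0; lra|].
have e2 : a * a' <= H ^+ 2 * (a * a').
  have haa : 0 <= a * a' by apply: mulr_ge0; lra.
  have : 1 <= H ^+ 2 by rewrite expr2; nra.
  nra.
nra.
Qed.

Lemma key (eps t1 t2 : R) b : t1 <= t2 + eps / 2 -> t2 <= t1 + eps / 2 ->
  dbern ((1 + tanhR t1) / 2) b <= expR eps * dbern ((1 + tanhR t2) / 2) b.
Proof.
move=> h1 h2.
have eH : expR eps = expR (eps / 2) ^+ 2 by rewrite expr2 -expRD; congr expR; field.
have hH : 1 <= expR (eps / 2).
  apply: (le_trans _ (expR_ge1Dx _)); lra.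
have ea : forall x y, x <= y + eps / 2 -> expR x <= expR (eps / 2) * expR y.
  by move=> x y hxy; rewrite -expRD ler_expR; lra.
rewrite eH !q_eq; case: b => /=.
  apply: ratio_le => //; try exact: expR_gt0; apply: ea; lra.
have fq : forall t : R, 1 - expR t / (expR t + expR (- t)) = expR (- t) / (expR (- t) + expR t).
  move=> t; have g1 := expR_gt0 t; have g2 := expR_gt0 (- t); field; lra.
rewrite !fq; apply: ratio_le => //; try exact: expR_gt0; apply: ea; lra.
Qed.


Section Comb.
Variable n : nat.

Definition PP (U : {ffun 'I_n -> bool}) (i : 'I_n) (c : constraint n) :=
  (i \in c.1) && [forall i' in c.1, U i' ==> (i' == i)].

Definition vv (z : {ffun 'I_n -> bool}) (i : 'I_n) (c : constraint n) : R :=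
  spm R c.2 * \prod_(i' in c.1 :\ i) spm R (z i').

Definition tt (eps : R) (Phi : seq (constraint n)) U z i : R := eps * Num.sqrt (size Phi)%:R / 2 * Lambda R Phi U z i.

Lemma tt_eq eps Phi U z i : tt eps Phi U z i = eps / 2 * \sum_(c <- Act Phi U i) vv z i c.
Proof.
rewrite /tt /Lambda /vv; case: Phi => [|c0 Phi]; first by rewrite /Act /= !big_nil !mulr0.
have hs : 0 < Num.sqrt (size (c0 :: Phi))%:R :> R by rewrite sqrtr_gt0 ltr0n.
set s := Num.sqrt _; set S := \sum_(_ <- _) _.
field; rewrite gt_eqF //.
Qed.

Lemma vv_norm z i c : `|vv z i c| = 1.
Proof.
rewrite /vv normrM normr_prod.
have h : forall b, `|spm R b| = 1 by case; rewrite /spm ?normrN normr1.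
by rewrite h big1 ?mulr1 // => j _; rewrite h.
Qed.

Lemma sum_perm Phi Phi' c U z i : perm_eq Phi' (c :: Phi) ->
  \sum_(c' <- Act Phi' U i) vv z i c' =
  (if PP U i c then vv z i c else 0) + \sum_(c' <- Act Phi U i) vv z i c'.
Proof.
move=> H; rewrite /Act (perm_big _ (perm_filter _ H)) /=.
rewrite /PP; case: ifP => _; by rewrite ?big_cons ?add0r.
Qed.

Definition Close eps (Phi1 Phi2 : seq (constraint n)) c := forall U z i,
  [/\ tt eps Phi1 U z i <= tt eps Phi2 U z i + eps / 2,
      tt eps Phi2 U z i <= tt eps Phi1 U z i + eps / 2 &
      (~~ PP U i c -> tt eps Phi1 U z i = tt eps Phi2 U z i)].

Lemma close_perm eps Phi Phi' c : 0 < eps -> perm_eq Phi' (c :: Phi) ->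
  Close eps Phi Phi' c /\ Close eps Phi' Phi c.
Proof.
move=> he H.
have G : forall U z i, tt eps Phi' U z i = tt eps Phi U z i + eps / 2 * (if PP U i c then vv z i c else 0).
  by move=> U z i; rewrite !tt_eq (sum_perm _ _ _ _ _ _ H) mulrDr addrC.
have B : forall U z i, -1 <= (if PP U i c then vv z i c else 0) <= 1.
  move=> U z i; case: ifP => _; last by lra.
  by rewrite -ler_norml vv_norm.
split=> U z i; rewrite G; have /andP[b1 b2] := B U z i;
  (split; [nra | nra | by case: ifP => //= _ _; rewrite mulr0 addr0]).
Qed.

Lemma PP_uniq (U : {ffun 'I_n -> bool}) (i j : 'I_n) (c : constraint n) : U i -> U j -> PP U i c -> PP U j c -> i = j.
Proof.
move=> Ui Uj /andP[_ /forall_inP Hi] /andP[hj _].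
by have := Hi j hj; rewrite Uj /= => /eqP ->.
Qed.

Lemma Y_le (eps : R) (Phi1 Phi2 : seq (constraint n)) (c : constraint n) (U z y : {ffun 'I_n -> bool}) : 0 < eps -> Close eps Phi1 Phi2 c ->
  dprod (fun i => if U i then dbern ((1 + tanhR (tt eps Phi1 U z i)) / 2) else dret R (z i)) y
  <= expR eps *
  dprod (fun i => if U i then dbern ((1 + tanhR (tt eps Phi2 U z i)) / 2) else dret R (z i)) y.
Proof.
move=> he HC; rewrite /dprod.
set oj := [pick j | U j && PP U j c].
pose K (i : 'I_n) : R := if oj == Some i then expR eps else 1.
have hE : 1 <= expR eps by apply: (le_trans _ (expR_ge1Dx _)); lra.
have hK : forall i, 1 <= K i by move=> i; rewrite /K; case: ifP.
pose d2 := fun i => if U i then dbern ((1 + tanhR (tt eps Phi2 U z i)) / 2) else dret R (z i).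
rewrite -/d2.
have d2ge0 : forall i b, 0 <= d2 i b.
  move=> i b; rewrite /d2; case: (U i); [apply: dbern_ge0; exact: q_in01 | exact: dret_ge0].
apply: (le_trans (y := \prod_(i < n) (K i * d2 i (y i)))).
  apply: ler_prod => i _; apply/andP; split.
    case: (U i); [apply: dbern_ge0; exact: q_in01 | exact: dret_ge0].
  have [h1 h2 h3] := HC U z i.
  rewrite /d2; case: ifP => Ui; last first.
    by have := dret_ge0 _ (z i) (y i); have := hK i; nra.
  case: (boolP (PP U i c)) => hP; last first.
    by rewrite h3 //; have := dbern_ge0 _ (y i) (q_in01 (tt eps Phi2 U z i)); have := hK i; nra.
  have -> : K i = expR eps.
    rewrite /K /oj; case: pickP => [j /andP[Uj Pj]|/(_ i)]; last by rewrite Ui hP.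
    by rewrite (PP_uniq _ _ _ _ Uj Ui Pj hP) eqxx.
  exact: key.
rewrite big_split /=; apply: ler_wpM2r; first by apply: prodr_ge0 => i _.
rewrite /K /oj; case: pickP => [j _|_]; last by rewrite big1.
rewrite (bigD1 j) //= eqxx big1 ?mulr1 // => i hi.
by case: eqP => // -[] /eqP; rewrite eq_sym (negbTE hi).
Qed.

End Comb.
End Aux.

Theorem theorem4p4 (R : realType) (n k : nat) (eps : R) :
  (2 <= k)%N -> 0 < eps ->
  forall Phi Phi' : seq (constraint n),
    instance k Phi -> instance k Phi' -> neighboring Phi Phi' ->
    forall T : {set {ffun 'I_n -> bool}},
      prob (DPAdvRand k eps Phi) T <= expR eps * prob (DPAdvRand k eps Phi') T.
Proof.
move=> hk he Phi Phi' _ _ [c Hc] T.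
have HC : @Close R n eps Phi Phi' c.
  case: Hc => H; [exact: (close_perm _ _ _ _ _ _ he H).1 | exact: (close_perm _ _ _ _ _ _ he H).2].
have pw : forall x, DPAdvRand k eps Phi x <= expR eps * DPAdvRand k eps Phi' x.
  move=> x; rewrite /DPAdvRand.
  apply: dbind_le_mid => [s0|s0]; first exact: dunif_ge0.
  apply: dbind_le_mid => [U|U].
    apply: dprod_ge0 => i b; apply: dbern_ge0; apply/andP; split.
      by rewrite invr_ge0 exprn_ge0.
    rewrite invf_le1; first by apply: exprn_ege1; lra.
    by apply: exprn_gt0; lra.
  apply: dbind_le_mid => [z|z]; first exact: dunif_ge0.
  apply: dbind_le_first => [y|y].
    exact: (Y_le _ _ _ _ _ _ _ _ _ he HC).
  apply: dbind_ge0 => [r|r]; first exact: dunif_ge0.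
  apply: dbind_ge0 => [f|f]; last exact: dret_ge0.
  apply: dprod_ge0 => i b; case: (U i); last exact: dret_ge0.
  apply: dbern_ge0; have := cos_le1 (((r : nat)%:R * pi / k%:R) : R).
  have := cos_geN1 (((r : nat)%:R * pi / k%:R) : R); move=> h1 h2.
  apply/andP; split; lra.
rewrite /prob mulr_sumr; apply: ler_sum => x _; exact: pw.
Qed.
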